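(* For real $\kappa\ge0$ and $U$ define \begin{align*} A(\kappa,U)&=2(1+\kappa^2)-U(\kappa^2-1),\\ B(\kappa,U)&=\kappa^2U^2+4U+2(1+\kappa^2),\\ C(\kappa,U)&=-\kappa^2U^3+2U^2+(2\kappa^2+6)U. \end{align*} Then $A(\kappa,U)=0$ holds if and only if $\kappa\neq1$ and $U=U_c(\kappa):=\frac{2(\kappa^2+1)}{\kappa^2-1}$, and $A(\kappa,U)=B(\kappa,U)=0$ holds if and only if $$\kappa^2=\kappa_t^2:=\frac{\sqrt{13}-2}{3}\qquad\text{and}\qquad U=U_t:=\frac{2(\kappa_t^2+1)}{\kappa_t^2-1}\ (\approx-6.61).$$ Moreover $C(\kappa_t,U_t)>0$.
   Context: $A,B,C$ are the Landau coefficients (on resonance, $\omega_a=\omega_c=1$) in the expansion $\delta(n)=An+Bn^2+Cn^3+O(n^4)$ of the reduced pump distance to threshold $\delta=4\lambda^2-(1+\kappa^2)$ as a function of the photon number $n=|\alpha|^2$ along superradiant steady states of the mean-field dissipative quantum Rabi model with Kerr nonlinearity $U=2KN/\omega_c$ and cavity decay rate $\kappa$ (in units of $\omega_c$). The point $A=B=0$ is the tricritical point. *)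

(* Defs.v *)
From Stdlib Require Import Reals Lra.
Open Scope R_scope.

Definition coefA (k U : R) : R := 2 * (1 + k ^ 2) - U * (k ^ 2 - 1).
Definition coefB (k U : R) : R := k ^ 2 * U ^ 2 + 4 * U + 2 * (1 + k ^ 2).
Definition coefC (k U : R) : R := - k ^ 2 * U ^ 3 + 2 * U ^ 2 + (2 * k ^ 2 + 6) * U.

Definition Uc (k : R) : R := 2 * (k ^ 2 + 1) / (k ^ 2 - 1).

Definition kt2 : R := (sqrt 13 - 2) / 3.
Definition kt : R := sqrt kt2.
Definition Ut : R := 2 * (kt2 + 1) / (kt2 - 1).

(* Main.v *)
Require Import Defs.
From Stdlib Require Import Reals Lra Psatz.
Open Scope R_scope.

Lemma s13 : sqrt 13 * sqrt 13 = 13.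
Proof. apply sqrt_sqrt; lra. Qed.

Lemma s13b : 3.6 < sqrt 13 < 3.61.
Proof. pose proof s13. pose proof (sqrt_pos 13). split; nra. Qed.

Lemma kt2_eq : 3 * kt2 ^ 2 + 4 * kt2 - 3 = 0.
Proof. unfold kt2. pose proof s13. field_simplify. nra. Qed.

Lemma kt2_b : 0.53 < kt2 < 0.54.
Proof. unfold kt2. pose proof s13b. lra. Qed.

Lemma kt_sq : kt ^ 2 = kt2.
Proof. unfold kt. pose proof kt2_b. simpl. rewrite Rmult_1_r. apply sqrt_sqrt. lra. Qed.

Lemma A_iff (k U : R) : 0 <= k -> coefA k U = 0 <-> (k <> 1 /\ U = Uc k).
Proof.
  intro Hk0. unfold coefA, Uc. split.
  - intro H. assert (Hk : k <> 1). { intro E. subst. lra. }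
    assert (k ^ 2 - 1 <> 0). { intro E. rewrite E in H. lra. }
    split; [exact Hk|]. apply (Rmult_eq_reg_r (k ^ 2 - 1)); [|exact H0].
    unfold Rdiv. rewrite Rmult_assoc, Rinv_l by exact H0. lra.
  - intros [Hk ->]. assert (k ^ 2 - 1 <> 0). { intro E. apply Hk.
      assert ((k-1)*(k+1) = 0) by nra. nra. }
    field. exact H.
Qed.

Theorem mainTheorem6 :
  (forall k U : R, 0 <= k ->
     (coefA k U = 0 <-> (k <> 1 /\ U = Uc k))) /\
  (forall k U : R, 0 <= k ->
     ((coefA k U = 0 /\ coefB k U = 0) <-> (k ^ 2 = kt2 /\ U = Ut))) /\
  coefC kt Ut > 0.
Proof.
  pose proof kt2_eq as E. pose proof kt2_b as Hb.
  split; [intros; apply A_iff; assumption|]. split.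
  - intros k U Hk. split.
    + intros [HA HB]. unfold coefA, coefB in *.
      set (x := k ^ 2) in *. assert (Hx : 0 <= x) by (unfold x; nra).
      assert (Q : 2 * (x + 1) * (3 * x ^ 2 + 4 * x - 3) = 0).
      { assert (V : U * (x - 1) = 2 * (1 + x)) by lra.
        replace (2 * (x + 1) * (3 * x ^ 2 + 4 * x - 3)) with
          (x * (U * (x-1)) ^ 2 + 4 * (x - 1) * (U * (x - 1)) + 2 * (1 + x) * (x - 1) ^ 2)
          by (rewrite V; ring).
        replace (x * (U * (x-1)) ^ 2 + 4 * (x - 1) * (U * (x - 1)) + 2 * (1 + x) * (x - 1) ^ 2)
          with ((x-1)^2 * (x * U ^ 2 + 4 * U + 2 * (1 + x))) by ring.
        rewrite HB. ring. }
      assert (Q2 : 3 * x ^ 2 + 4 * x - 3 = 0).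
      { destruct (Rmult_integral _ _ Q); [lra|assumption]. }
      assert (Hxe : x = kt2).
      { pose proof s13. pose proof (sqrt_pos 13). unfold kt2.
        assert ((3 * x - (sqrt 13 - 2)) * (3 * x + sqrt 13 + 2) = 0) by nra.
        destruct (Rmult_integral _ _ H1); lra. }
      split; [exact Hxe|]. unfold Ut. rewrite <- Hxe.
      assert (x - 1 <> 0) by lra. apply (Rmult_eq_reg_r (x - 1)); [|assumption].
      unfold Rdiv. rewrite Rmult_assoc, Rinv_l by assumption. lra.
    + intros [Hx HU]. unfold coefA, coefB, Ut in *. rewrite Hx, HU.
      assert (kt2 - 1 <> 0) by lra. split; field_simplify_eq; try assumption.
      * ring.
      * nra.
  - unfold coefC. rewrite kt_sq. unfold Ut.
    set (x := kt2) in *. assert (x - 1 <> 0) by lra.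
    set (U := 2 * (x + 1) / (x - 1)).
    assert (HU : U * (x - 1) = 2 * (x + 1)) by (unfold U; field; assumption).
    assert (HB : x * U ^ 2 + 4 * U + 2 * (1 + x) = 0).
    { apply (Rmult_eq_reg_l ((x-1)^2)); [|apply pow_nonzero; assumption].
      replace ((x - 1) ^ 2 * (x * U ^ 2 + 4 * U + 2 * (1 + x))) with
        (x * (U * (x-1)) ^ 2 + 4 * (x - 1) * (U * (x - 1)) + 2 * (1 + x) * (x - 1) ^ 2) by ring.
      rewrite HU. replace ((x - 1) ^ 2 * 0) with (2 * (x + 1) * 0) by ring.
      rewrite <- E. ring. }
    assert (HUb : U < -6).
    { assert (U * (x-1) > -6 * (x - 1)) by lra. nra. }
    replace (- x * U ^ 3 + 2 * U ^ 2 + (2 * x + 6) * U) with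
      (U * (6 * U + 4 * x + 8) - U * (x * U ^ 2 + 4 * U + 2 * (1 + x))) by ring.
    rewrite HB. nra.
Qed.
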